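(* Let $G=(V,E)$ be an atomic bispanning graph with vertex-connectivity $2$, and let $\{x,y\}\subseteq V$ be a vertex cut. Then $G$ contains no edge with ends $x$ and $y$, and $G$ is the $2$-clique sum of two simple bispanning graphs: there exist simple bispanning graphs $G_1$, $G_2$ (on disjoint vertex and edge sets) with edges $d_1$ of $G_1$ and $d_2$ of $G_2$ such that $G$ is obtained from the disjoint union of $G_1$ and $G_2$ by identifying the two ends of $d_1$ with the two ends of $d_2$ and deleting $d_1$ and $d_2$.
   Context: Graphs are finite, undirected, may have parallel edges, no loops; simple means no parallel edges. A spanning tree of $G$ is $T\subseteq E$ with $(V,T)$ connected and acyclic; $G$ is bispanning if $E$ is the union of two disjoint spanning trees. A bispanning graph is atomic if its only bispanning subgraphs are itself and single vertices. A vertex cut is a vertex set whose deletion increases the number of connected components; vertex-connectivity is the largest $k$ with $|V|>k$ such that deleting fewer than $k$ vertices leaves $G$ connected. *)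

(* Defs.v *)
From mathcomp Require Import all_boot.
Set Implicit Arguments. Unset Strict Implicit. Unset Printing Implicit Defensive.

(* A finite undirected multigraph without loops: each edge has two (distinct)
   ends; the orientation src/tgt carries no meaning (see [joins]). *)
Record mgraph := MGraph {
  vtx : finType;
  edg : finType;
  src : edg -> vtx;
  tgt : edg -> vtx;
  loopfree : forall e, src e != tgt e }.

Section Defs.
Variable G : mgraph.
Local Notation V := (vtx G).
Local Notation E := (edg G).

Definition joins (e : E) (u v : V) : bool :=
  ((src e == u) && (tgt e == v)) || ((src e == v) && (tgt e == u)).

Definition adj (F : {set E}) : rel V := fun u v => [exists e in F, joins e u v].

Definition connected_on (S : {set V}) (F : {set E}) : Prop :=
  forall u v, u \in S -> v \in S -> connect (adj F) u v.

Fixpoint walk (u : V) (es : seq E) (v : V) : Prop :=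
  match es with
  | [::] => u = v
  | e :: es' => exists w, joins e u w /\ walk w es' v
  end.

(* F is acyclic: no nonempty closed walk with pairwise distinct edges in F
   (in a loopless multigraph such a closed trail exists iff F has a cycle) *)
Definition acyclic (F : {set E}) : Prop :=
  ~ exists (u : V) (es : seq E),
      [/\ es <> [::], uniq es, all (fun e => e \in F) es & walk u es u].

Definition edges_within (S : {set V}) (F : {set E}) : Prop :=
  forall e, e \in F -> src e \in S /\ tgt e \in S.

Definition spanning_tree_of (S : {set V}) (F : {set E}) (T : {set E}) : Prop :=
  [/\ T \subset F, connected_on S T & acyclic T].

Definition bispanning_sub (S : {set V}) (F : {set E}) : Prop :=
  [/\ edges_within S F, S != set0 &
      exists T1 T2 : {set E},
        [/\ spanning_tree_of S F T1, spanning_tree_of S F T2,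
            [disjoint T1 & T2] & T1 :|: T2 = F]].

Definition bispanning : Prop := bispanning_sub setT setT.

Definition atomic : Prop :=
  bispanning /\
  forall (S : {set V}) (F : {set E}), bispanning_sub S F ->
    (S = setT /\ F = setT) \/ (#|S| = 1 /\ F = set0).

Definition edges_avoiding (X : {set V}) : {set E} :=
  [set e | (src e \notin X) && (tgt e \notin X)].

Definition ncomp (X : {set V}) : nat :=
  n_comp (adj (edges_avoiding X)) (~: X).

Definition vertex_cut (X : {set V}) : Prop := ncomp set0 < ncomp X.

Definition k_connected (k : nat) : Prop :=
  k < #|V| /\
  forall X : {set V}, #|X| < k -> connected_on (~: X) (edges_avoiding X).

Definition vertex_connectivity (k : nat) : Prop :=
  k_connected k /\ forall k', k_connected k' -> k' <= k.

Definition simple : Prop :=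
  forall e1 e2 : E, joins e2 (src e1) (tgt e1) -> e1 = e2.

End Defs.
Arguments vertex_cut : clear implicits.
Arguments vertex_connectivity : clear implicits.
Arguments joins {G} e u v.
Arguments atomic : clear implicits.
Arguments bispanning : clear implicits.
Arguments simple : clear implicits.

(* G is (isomorphic to) the graph obtained from the disjoint union of G1 and
   G2 by identifying src d1 with src d2 and tgt d1 with tgt d2 and deleting
   d1 and d2.  f is the quotient map on vertices, s identifies the edges of G
   with the edges of G1 + G2 other than d1, d2. *)
Definition two_clique_sum (G1 G2 : mgraph) (d1 : edg G1) (d2 : edg G2)
    (G : mgraph) : Prop :=
  let esrc (a : edg G1 + edg G2) : vtx G1 + vtx G2 :=
      match a with inl e => inl (src e) | inr e => inr (src e) end in
  let etgt (a : edg G1 + edg G2) : vtx G1 + vtx G2 :=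
      match a with inl e => inl (tgt e) | inr e => inr (tgt e) end in
  let glued (u w : vtx G1 + vtx G2) : Prop :=
      (u = inl (src d1) /\ w = inr (src d2)) \/
      (u = inl (tgt d1) /\ w = inr (tgt d2)) in
  exists (f : vtx G1 + vtx G2 -> vtx G) (s : edg G -> edg G1 + edg G2),
    [/\ forall v : vtx G, exists u, f u = v,
        forall u w, f u = f w <-> (u = w \/ glued u w \/ glued w u),
        injective s,
        forall a, (exists e, s e = a) <-> (a <> inl d1 /\ a <> inr d2) &
        forall e, joins e (f (esrc (s e))) (f (etgt (s e)))].

(* Main.v *)
Require Import Defs.
From mathcomp Require Import all_boot zify.
Set Implicit Arguments. Unset Strict Implicit. Unset Printing Implicit Defensive.


Section Basic.
Variable G : mgraph.
Local Notation V := (vtx G).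
Local Notation E := (edg G).
Implicit Types (F : {set E}) (S : {set V}) (e : E) (u v w : V).

Lemma joins_sym e u v : joins e u v = joins e v u.
Proof. by rewrite /joins orbC. Qed.

Lemma joins_st e : joins e (src e) (tgt e).
Proof. by rewrite /joins !eqxx. Qed.

Lemma joinsxx e u : joins e u u = false.
Proof.
rewrite /joins orbb; apply/negP => /andP[/eqP h1 /eqP h2].
by move: (loopfree e); rewrite h1 h2 eqxx.
Qed.

Lemma adj_sym F : symmetric (adj F).
Proof.
move=> u v; rewrite /adj; apply/existsP/existsP => -[e /andP[eF j]];
by exists e; rewrite eF joins_sym.
Qed.

Lemma adj_csym F : connect_sym (adj F).
Proof. exact/sym_connect_sym/adj_sym. Qed.

Lemma adj1 F e u v : e \in F -> joins e u v -> adj F u v.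
Proof. by move=> eF j; apply/existsP; exists e; rewrite eF. Qed.

Lemma walk_cat u s1 s2 v :
  walk u (s1 ++ s2) v <-> exists w, walk u s1 w /\ walk w s2 v.
Proof.
elim: s1 u => [|e s1 IH] u /=.
  by split=> [h|[w [-> h]]] //; exists u.
split=> [[w [j /IH [w' [h1 h2]]]]|[w' [[w [j h1]] h2]]].
  by exists w'; split=> //; exists w.
by exists w; split=> //; apply/IH; exists w'.
Qed.

Lemma walk_connect F u es v :
  all (fun e => e \in F) es -> walk u es v -> connect (adj F) u v.
Proof.
elim: es u => [|e es IH] u /=; first by move=> _ ->.
move=> /andP[eF aF] [w [j h]].
apply: (connect_trans (connect1 (adj1 eF j))); exact: IH.
Qed.

Lemma trail_path F u p : path (adj F) u p -> uniq (u :: p) ->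
  exists es, [/\ uniq es, all (fun e => e \in F) es, walk u es (last u p) &
    all (fun f => (src f \in u :: p) && (tgt f \in u :: p)) es].
Proof.
elim: p u => [|y p IH] u /=; first by move=> _ _; exists [::].
move=> /andP[a pth] /andP[nu un].
have [es [ues aes wes ends]] := IH y pth un.
case/existsP: a => e /andP[eF j].
exists (e :: es); split=> /=.
- rewrite ues andbT; apply/negP => ees.
  move/allP: ends => /(_ e ees) /andP[s t].
  case/orP: j => /andP[/eqP h1 /eqP h2]; move: nu.
    by rewrite -h1 s.
  by rewrite -h2 t.
- by rewrite eF.
- by exists y.
- apply/andP; split.
    by case/orP: j => /andP[/eqP -> /eqP ->]; rewrite !inE !eqxx ?orbT.
  apply/allP => f /(allP ends) /andP[s t].
  by rewrite in_cons (in_cons u) s t !orbT.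
Qed.

Lemma trail F u v : connect (adj F) u v ->
  exists es, [/\ uniq es, all (fun e => e \in F) es & walk u es v].
Proof.
case/connectP => p pth ->.
case: (shortenP pth) => p' pth' up' _.
by have [es [h1 h2 h3 _]] := trail_path pth' up'; exists es.
Qed.

Lemma acyclic_sub F1 F2 : F1 \subset F2 -> acyclic F2 -> acyclic F1.
Proof.
move=> sub ac [u [es [ne ues aes wes]]]; apply: ac; exists u, es; split=> //.
by apply/allP => e /(allP aes) /(subsetP sub).
Qed.

Definition cc F z : {set V} := [set w | connect (adj F) z w].
Definition comps S F : {set {set V}} := [set cc F z | z in S].

Lemma cc_refl F z : z \in cc F z.
Proof. by rewrite inE connect0. Qed.

Lemma cc_eq F a b : connect (adj F) a b -> cc F a = cc F b.
Proof.
move=> h; apply/setP => w; rewrite !inE.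
exact: (same_connect (adj_csym F) h).
Qed.

Lemma cc_eqP F a b : cc F a = cc F b -> connect (adj F) a b.
Proof. by move=> h; move: (cc_refl F b); rewrite -h inE. Qed.

Lemma connect_set0 u v : connect (adj (set0 : {set E})) u v = (u == v).
Proof.
apply/idP/eqP => [|->]; last exact: connect0.
case/connectP => [[|y p]] //= /andP[/existsP[e]]; by rewrite in_set0.
Qed.

Lemma comps_set0 S : #|comps S set0| = #|S|.
Proof.
have -> : comps S set0 = [set [set z] | z in S].
  apply: eq_imset => z; apply/setP => w; by rewrite !inE connect_set0 eq_sym.
exact/card_imset/set1_inj.
Qed.

Lemma connect_add F e a b :
  connect (adj (e |: F)) a b = [|| connect (adj F) a b,
     connect (adj F) a (src e) && connect (adj F) (tgt e) b |
     connect (adj F) a (tgt e) && connect (adj F) (src e) b].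
Proof.
have mono : forall c d, connect (adj F) c d -> connect (adj (e |: F)) c d.
  apply: connect_sub => c d /existsP[f /andP[fF j]]; apply: connect1.
  by apply/existsP; exists f; rewrite in_setU1 fF orbT.
have st : connect (adj (e |: F)) (src e) (tgt e).
  by apply: connect1; apply/existsP; exists e; rewrite setU11 joins_st.
have ts : connect (adj (e |: F)) (tgt e) (src e).
  by rewrite adj_csym.
apply/idP/idP; last first.
  case/or3P => [/mono //|/andP[h1 h2]|/andP[h1 h2]].
    exact: connect_trans (mono _ _ h1) (connect_trans st (mono _ _ h2)).
  exact: connect_trans (mono _ _ h1) (connect_trans ts (mono _ _ h2)).
have tr := @connect_trans _ (adj F).
have step : forall a c b, adj (e |: F) a c ->
  [|| connect (adj F) c b,
     connect (adj F) c (src e) && connect (adj F) (tgt e) b |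
     connect (adj F) c (tgt e) && connect (adj F) (src e) b] ->
  [|| connect (adj F) a b,
     connect (adj F) a (src e) && connect (adj F) (tgt e) b |
     connect (adj F) a (tgt e) && connect (adj F) (src e) b].
  move=> a0 c b0 /existsP[f /andP[fin j]].
  move: fin; rewrite in_setU1 => /orP[/eqP ef|fF].
    rewrite ef in j.
    case/orP: j => /andP[/eqP <- /eqP <-].
      by case/or3P => [->|/andP[h3 ->]|/andP[h3 ->]]; rewrite ?connect0 ?orbT ?andbT.
    by case/or3P => [->|/andP[h3 ->]|/andP[h3 ->]]; rewrite ?connect0 ?orbT ?andbT.
  have ac : connect (adj F) a0 c by apply: connect1; exact: adj1 fF j.
  case/or3P => [h|/andP[h3 h4]|/andP[h3 h4]].
  - by rewrite (tr _ _ _ ac h).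
  - by rewrite (tr _ _ _ ac h3) h4 orbT.
  - by rewrite (tr _ _ _ ac h3) h4 !orbT.
case/connectP => p pth ->; elim: p a pth => [|c p IH] a /=.
  by rewrite connect0.
case/andP => h pth; exact: step h (IH c pth).
Qed.

Lemma cc_add F e z : ~~ connect (adj F) (src e) (tgt e) ->
  cc (e |: F) z = if connect (adj F) z (src e) || connect (adj F) z (tgt e)
                  then cc F (src e) :|: cc F (tgt e) else cc F z.
Proof.
move=> nc; apply/setP => w; rewrite inE connect_add.
case: ifP => h; rewrite !inE.
  case/orP: h => hz.
    rewrite !(same_connect (adj_csym F) hz) connect0 (negbTE nc) /=.
    by rewrite orbF.
  have nc' : connect (adj F) (tgt e) (src e) = false.
    by rewrite adj_csym (negbTE nc).
  rewrite !(same_connect (adj_csym F) hz) connect0 nc' /=.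
  by rewrite orbC.
move/negbT: h; rewrite negb_or => /andP[/negbTE -> /negbTE ->].
by rewrite /= orbF.
Qed.

Lemma comps_add S F e : src e \in S -> tgt e \in S ->
  ~~ connect (adj F) (src e) (tgt e) ->
  #|comps S (e |: F)| + 1 = #|comps S F|.
Proof.
move=> uS vS nc.
set U := cc F (src e) :|: cc F (tgt e).
have eqC : comps S (e |: F) =
   U |: ((comps S F :\ cc F (src e)) :\ cc F (tgt e)).
  apply/setP => K; rewrite in_setU1 !in_setD1; apply/imsetP/idP.
    case=> z zS ->; rewrite cc_add //; case: ifP => h; first by rewrite eqxx.
    apply/orP; right; rewrite imset_f // andbT.
    apply/andP; split; apply/negP => /eqP /cc_eqP hc; by rewrite hc ?orbT in h.
  case/orP => [/eqP ->|/and3P[nv nu /imsetP[z zS hK]]].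
    by exists (src e) => //; rewrite cc_add // connect0.
  subst K; exists z => //; rewrite cc_add //; case: ifP => // /orP[] /cc_eq hc.
    by rewrite hc eqxx in nu.
  by rewrite hc eqxx in nv.
rewrite eqC cardsU1.
have -> : U \notin (comps S F :\ cc F (src e)) :\ cc F (tgt e).
  apply/negP; rewrite !in_setD1 => /and3P[_ _ /imsetP[z _ hz]].
  have h1 : src e \in cc F z by rewrite -hz /U in_setU cc_refl.
  have h2 : tgt e \in cc F z by rewrite -hz /U in_setU cc_refl orbT.
  move: h1 h2; rewrite !inE => h1 h2; move/negP: nc; apply.
  by apply: connect_trans h2; rewrite adj_csym.
rewrite [in RHS](cardsD1 (cc F (src e))) [#|comps S F :\ _|](cardsD1 (cc F (tgt e))).
rewrite imset_f // in_setD1 imset_f // andbT.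
have -> : cc F (tgt e) != cc F (src e).
  by apply/negP => /eqP /cc_eqP h; move/negP: nc; apply; rewrite adj_csym.
by rewrite /= add1n addnC.
Qed.

Lemma forest_count S F : edges_within S F -> acyclic F ->
  #|F| + #|comps S F| = #|S|.
Proof.
move Hn: #|F| => n; elim: n F Hn => [|n IH] F Hn ew ac.
  by rewrite (cards0_eq Hn) comps_set0.
have [e eF] : exists e, e \in F by apply/card_gt0P; rewrite Hn.
have eqF := setD1K eF.
set F0 := F :\ e in eqF.
have sub0 : F0 \subset F by apply: subsetDl.
have n0 : #|F0| = n by move: Hn; rewrite (cardsD1 e) eF add1n => -[].
have ew0 : edges_within S F0 by move=> f /(subsetP sub0) /ew.
have ac0 := acyclic_sub sub0 ac.
have nc : ~~ connect (adj F0) (src e) (tgt e).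
  apply/negP => /trail [es [ues aes wes]].
  apply: ac; exists (tgt e), (e :: es); split=> //.
  - by rewrite /= ues andbT; apply/negP => /(allP aes); rewrite !inE eqxx.
  - by rewrite /= eF; apply/allP => f /(allP aes) /(subsetP sub0).
  - by exists (src e); rewrite joins_sym joins_st.
have [uS vS] := ew e eF.
have -> : comps S F = comps S (e |: F0) by rewrite eqF.
rewrite -(IH F0 n0 ew0 ac0) -(comps_add uS vS nc).
by rewrite addnA addn1 addSn.
Qed.

Lemma comps_ge1 S F : S != set0 -> 0 < #|comps S F|.
Proof. by case/set0Pn => z zS; apply/card_gt0P; exists (cc F z); apply: imset_f. Qed.

Lemma comps_le1 S F : #|comps S F| <= 1 -> connected_on S F.
Proof.
move=> /card_le1P h u v uS vS.
have hu : cc F u \in comps S F by apply: imset_f.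
have hv : cc F v \in comps S F by apply: imset_f.
have := h _ hu (cc F v); rewrite hv inE => /esym /eqP /cc_eqP hvu.
by rewrite adj_csym.
Qed.

Lemma conn_comps S F : connected_on S F -> #|comps S F| <= 1.
Proof.
move=> c; apply/card_le1P => K /imsetP[z zS ->] L; rewrite inE.
apply/imsetP/eqP => [[w wS ->]|->]; last by exists z.
by apply: cc_eq; apply: c.
Qed.

Lemma comps_ge2 S F u v : u \in S -> v \in S -> ~~ connect (adj F) u v ->
  1 < #|comps S F|.
Proof.
move=> uS vS nc; apply/card_gt1P; exists (cc F u), (cc F v).
split; try apply: imset_f => //.
by apply/negP => /eqP /cc_eqP h; rewrite h in nc.
Qed.

Lemma tree_card S F : edges_within S F -> acyclic F -> connected_on S F ->
  S != set0 -> #|F| + 1 = #|S|.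
Proof.
move=> ew ac c ne; rewrite -(forest_count ew ac).
have := conn_comps c; have := comps_ge1 F ne; case: #|comps S F| => [|[|]]//.
Qed.

Lemma forest_conn S F : edges_within S F -> acyclic F -> #|F| + 1 = #|S| ->
  connected_on S F.
Proof.
move=> ew ac; rewrite -(forest_count ew ac) => /eqP; rewrite eqn_add2l => /eqP h.
by apply: comps_le1; rewrite -h.
Qed.

Lemma forest_le S F : edges_within S F -> acyclic F -> S != set0 ->
  #|F| + 1 <= #|S|.
Proof.
move=> ew ac ne; rewrite -(forest_count ew ac) leq_add2l; exact: comps_ge1.
Qed.

Lemma forest_disc S F u v : edges_within S F -> acyclic F -> u \in S -> v \in S ->
  ~~ connect (adj F) u v -> #|F| + 2 <= #|S|.
Proof.
move=> ew ac uS vS nc; rewrite -(forest_count ew ac) leq_add2l.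
exact: comps_ge2 uS vS nc.
Qed.

Definition ES S : {set E} := [set e | (src e \in S) && (tgt e \in S)].

Lemma ES_src S e : e \in ES S -> src e \in S.
Proof. by rewrite inE => /andP[]. Qed.
Lemma ES_tgt S e : e \in ES S -> tgt e \in S.
Proof. by rewrite inE => /andP[]. Qed.

Lemma ES_within S : edges_within S (ES S).
Proof. by move=> e eS; split; [apply: ES_src eS | apply: ES_tgt eS]. Qed.

End Basic.

Section Sub.
Variables (G : mgraph) (S : {set vtx G}) (x y : vtx G).
Hypotheses (xS : x \in S) (yS : y \in S) (xy : x != y).

Definition sV := {z : vtx G | z \in S}.
Definition sE := option {e : edg G | e \in ES S}.

Definition ssrc (a : sE) : sV :=
  match a with Some e => Sub (src (val e)) (ES_src (valP e)) | None => Sub x xS end.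
Definition stgt (a : sE) : sV :=
  match a with Some e => Sub (tgt (val e)) (ES_tgt (valP e)) | None => Sub y yS end.

Lemma sloop a : ssrc a != stgt a.
Proof. by case: a => [e|] /=; rewrite -val_eqE /= ?loopfree. Qed.

Definition subG := MGraph sloop.

Lemma sjoins e (u w : sV) :
  @joins subG (Some e) u w = joins (val e) (val u) (val w).
Proof. by rewrite /joins -!val_eqE. Qed.

Lemma sjoinsN (u w : sV) :
  @joins subG None u w =
  ((x == val u) && (y == val w)) || ((x == val w) && (y == val u)).
Proof. by rewrite /joins -!val_eqE. Qed.

Definition vE (a : sE) : option (edg G) := omap val a.

Lemma vEK : ocancel vE (fun e => insub e).
Proof. by case=> [e|] //=; rewrite valK. Qed.

Lemma walk_sub (u w : sV) es : None \notin es -> @walk subG u es w ->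
  walk (val u) (pmap vE es) (val w).
Proof.
elim: es u => [|[a|] es IH] u //=; first by move=> _ ->.
rewrite in_cons /= => hN [w' [j h]]; exists (val w'); split.
  by rewrite -sjoins.
exact: IH.
Qed.

Lemma no_cycle_sub (R : {set edg G}) (es : seq sE) (u : sV) :
  acyclic R -> es != [::] -> uniq es -> None \notin es ->
  (forall e, Some e \in es -> val e \in R) -> @walk subG u es u -> False.
Proof.
move=> ac ne ues hN hR wes; apply: ac; exists (val u), (pmap vE es); split.
- case: es ne hN {ues hR wes} => [|[a|] es] //= _ _; by [].
- exact: pmap_uniq vEK _ ues.
- apply/allP => e; rewrite mem_pmap => /mapP[[a|] ina] //= [->].
  exact: hR.
- exact: walk_sub.
Qed.

Definition liftP (P : {set edg G}) : {set sE} :=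
  [set a : sE | if a is Some e then val e \in P else false].
Definition liftQ (Q : {set edg G}) : {set sE} :=
  [set a : sE | if a is Some e then val e \in Q else true].

Lemma acyc_liftP (P : {set edg G}) : acyclic P -> @acyclic subG (liftP P).
Proof.
move=> ac [u [es [ne ues aes wes]]].
have hN : None \notin es by apply/negP => /(allP aes); rewrite inE.
apply: (no_cycle_sub ac _ ues hN _ wes); first by apply/eqP.
by move=> e /(allP aes); rewrite inE.
Qed.

Lemma acyc_liftQ (Q : {set edg G}) : acyclic Q -> ~~ connect (adj Q) x y ->
  @acyclic subG (liftQ Q).
Proof.
move=> ac nc [u [es [ne ues aes wes]]].
case: (boolP (None \in es)) => hN; last first.
  apply: (no_cycle_sub ac _ ues hN _ wes); first by apply/eqP.
  by move=> e /(allP aes); rewrite inE.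
case/splitPr: hN ues aes wes => es1 es2 ues aes /walk_cat [w [w1 [w' [j w2]]]].
have hN : None \notin es2 ++ es1.
  by move: ues; rewrite uniq_catC /= => /andP[].
have w3 : @walk subG w' (es2 ++ es1) w by apply/walk_cat; exists u.
have aQ : all (fun e => e \in Q) (pmap vE (es2 ++ es1)).
  apply/allP => e; rewrite mem_pmap => /mapP[[a|] ina] //= [->].
  have : Some a \in es1 ++ None :: es2.
    by move: ina; rewrite !mem_cat in_cons => /orP[] ->; rewrite ?orbT.
  by move/(allP aes); rewrite inE.
have := walk_connect aQ (walk_sub hN w3).
rewrite sjoinsN in j; case/orP: j => /andP[/eqP <- /eqP <-] h.
  by rewrite adj_csym h in nc.
by rewrite h in nc.
Qed.

Lemma card_sub_set (P : {set edg G}) : P \subset ES S ->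
  #|[set e : {e : edg G | e \in ES S} | val e \in P]| = #|P|.
Proof.
move=> sub; rewrite -(card_imset _ val_inj); apply: eq_card => e.
apply/imsetP/idP => [[a]|eP]; first by rewrite inE => h ->.
by exists (Sub e (subsetP sub e eP)); rewrite ?inE SubK.
Qed.

Lemma card_liftP (P : {set edg G}) : P \subset ES S -> #|liftP P| = #|P|.
Proof.
move=> sub; rewrite -(card_sub_set sub).
rewrite -(card_imset [set e : {e : edg G | e \in ES S} | val e \in P] (@Some_inj _)).
apply: eq_card => -[a|]; rewrite !inE.
  by rewrite (mem_imset _ _ (@Some_inj _)) inE.
by apply/esym/imsetP => -[].
Qed.

Lemma card_liftQ (Q : {set edg G}) : Q \subset ES S -> #|liftQ Q| = #|Q|.+1.
Proof.
move=> sub; rewrite -(card_sub_set sub).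
rewrite -(card_imset [set e : {e : edg G | e \in ES S} | val e \in Q] (@Some_inj _)).
have -> : liftQ Q = None |: [set Some a | a in [set e : {e : edg G | e \in ES S} | val e \in Q]].
  apply/setP => -[a|]; rewrite !inE //.
  by rewrite (mem_imset _ _ (@Some_inj _)) inE.
rewrite cardsU1; case: imsetP => // -[? _] //.
Qed.

Lemma card_sV : #|[set: sV]| = #|S|.
Proof. by rewrite cardsT card_sig. Qed.

Lemma sub_bispanning (P Q : {set edg G}) :
  P \subset ES S -> Q \subset ES S -> [disjoint P & Q] -> P :|: Q = ES S ->
  acyclic P -> acyclic Q -> #|P| + 1 = #|S| -> #|Q| + 2 = #|S| ->
  ~~ connect (adj Q) x y -> bispanning subG.
Proof.
move=> sP sQ dPQ uPQ acP acQ cP cQ nc.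
have ewT : @edges_within subG setT setT by move=> *; rewrite !inE.
split=> //.
  by apply/set0Pn; exists (Sub x xS : sV); rewrite inE.
exists (liftP P), (liftQ Q); split.
- split; first exact: subsetT.
    apply: forest_conn; first by move=> *; rewrite !inE.
      exact: acyc_liftP.
    by rewrite card_liftP // card_sV.
  exact: acyc_liftP.
- split; first exact: subsetT.
    apply: forest_conn; first by move=> *; rewrite !inE.
      exact: acyc_liftQ.
    by rewrite card_liftQ // card_sV -cQ addn1 addn2.
  exact: acyc_liftQ.
- rewrite -setI_eq0; apply/eqP/setP => -[a|]; rewrite !inE //.
  apply/negP => /andP[h1 h2]; move: dPQ; rewrite -setI_eq0 => /eqP/setP/(_ (val a)).
  by rewrite !inE h1 h2.
- apply/setP => -[a|]; rewrite !inE //.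
  have := valP a; move: (val a) => e; by rewrite -uPQ inE.
Qed.

Lemma sub_simple :
  (forall e : edg G, ~~ joins e x y) ->
  (forall e1 e2 : edg G, joins e2 (src e1) (tgt e1) -> e1 = e2) ->
  simple subG.
Proof.
move=> noxy nopar [a|] [b|] //=.
- by rewrite sjoins /= => /nopar /val_inj ->.
- rewrite sjoinsN /= => /orP[]/andP[/eqP h1 /eqP h2]; move: (noxy (val a)).
    by rewrite h1 h2 joins_st.
  by rewrite h1 h2 joins_sym joins_st.
- by rewrite sjoins /= => h; move: (noxy (val b)); rewrite h.
Qed.

End Sub.


Section Main.
Variable G : mgraph.
Local Notation V := (vtx G).
Local Notation E := (edg G).
Hypothesis atG : atomic G.

Lemma cross (T P Q : {set E}) (x y : V) : acyclic T -> x != y ->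
  P \subset T -> Q \subset T -> P :&: Q = set0 ->
  connect (adj P) x y -> connect (adj Q) y x -> False.
Proof.
move=> ac xy sP sQ dPQ /trail[p [up ap wp]] /trail[q [uq aq wq]].
apply: ac; exists x, (p ++ q); split.
- by case: p wp {up ap} => [/= h|]; [by rewrite h eqxx in xy|].
- rewrite cat_uniq up uq /= andbT; apply/hasPn => e /(allP aq) eQ.
  apply/negP => /(allP ap) eP.
  by move/setP: dPQ => /(_ e); rewrite !inE eP eQ.
- by rewrite all_cat; apply/andP; split; apply/allP => e;
    [move/(allP ap) /(subsetP sP) | move/(allP aq) /(subsetP sQ)].
- by apply/walk_cat; exists y.
Qed.

Lemma sparse (S : {set V}) : S != setT -> 1 < #|S| -> #|ES S| + 3 <= 2 * #|S|.
Proof.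
move=> nT c1.
case: atG => [[_ _ [T1 [T2 [[_ _ ac1] [_ _ ac2] dT uT]]]] at2].
set P1 := T1 :&: ES S; set P2 := T2 :&: ES S.
have ew1 : edges_within S P1 by move=> e; rewrite inE => /andP[_ /ES_within].
have ew2 : edges_within S P2 by move=> e; rewrite inE => /andP[_ /ES_within].
have a1 : acyclic P1 by apply: acyclic_sub ac1; apply: subsetIl.
have a2 : acyclic P2 by apply: acyclic_sub ac2; apply: subsetIl.
have ne : S != set0 by apply/set0Pn/card_gt0P; apply: ltnW.
have l1 := forest_le ew1 a1 ne; have l2 := forest_le ew2 a2 ne.
have cE : #|ES S| = #|P1| + #|P2|.
  rewrite -cardsUI.
  have -> : P1 :&: P2 = set0.
    apply/setP => e; rewrite !inE; apply/negP => /andP[/andP[h1 _] /andP[h2 _]].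
    by move: dT; rewrite -setI_eq0 => /eqP/setP/(_ e); rewrite !inE h1 h2.
  rewrite cards0 addn0; apply: eq_card => e.
  by rewrite !inE -andb_orl -in_setU uT inE.
case: (boolP ((#|P1| + 1 == #|S|) && (#|P2| + 1 == #|S|))) => [/andP[/eqP h1 /eqP h2]|h].
  have bs : bispanning_sub S (ES S).
    split=> //; first exact: ES_within.
    exists P1, P2; split.
    - by split; [apply: subsetIr | apply: forest_conn h1 |].
    - by split; [apply: subsetIr | apply: forest_conn h2 |].
    - rewrite -setI_eq0; apply/eqP/setP => e; rewrite !inE.
      apply/negP => /andP[/andP[e1 _] /andP[e2 _]].
      by move: dT; rewrite -setI_eq0 => /eqP/setP/(_ e); rewrite !inE e1 e2.
    - apply/setP => e; rewrite !inE -andb_orl -in_setU uT inE //.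
  case: (at2 _ _ bs) => [[hS _]|[hS _]]; first by rewrite hS eqxx in nT.
  by rewrite hS in c1.
move: h; rewrite negb_and => h; rewrite cE.
case/orP: h => /eqP h; lia.
Qed.

Lemma nopar : 2 < #|V| -> forall e1 e2 : E, joins e2 (src e1) (tgt e1) -> e1 = e2.
Proof.
move=> n3 e1 e2 j; apply/eqP/negPn/negP => ne.
set S := [set src e1; tgt e1].
have cS : #|S| = 2 by rewrite cards2 loopfree.
have nT : S != setT.
  by apply/negP => /eqP h; move: n3; rewrite -cardsT -h cS.
have := sparse nT (ltac:(by rewrite cS)).
have sub : [set e1; e2] \subset ES S.
  apply/subsetP => e; rewrite !inE => /orP[]/eqP->; rewrite ?eqxx ?orbT //.
  by case/orP: j => /andP[/eqP -> /eqP ->]; rewrite !eqxx ?orbT.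
have := subset_leq_card sub; rewrite cards2 ne cS; lia.
Qed.

End Main.

Section Glue.
Variable G : mgraph.
Local Notation V := (vtx G).
Local Notation E := (edg G).
Variables (x y : V) (A B : {set V}).
Hypotheses (xA : x \in A) (yA : y \in A) (xB : x \in B) (yB : y \in B) (xy : x != y).
Hypotheses (hAB : A :&: B = [set x; y]) (uAB : A :|: B = setT).
Hypotheses (cover : forall e, (e \in ES A) || (e \in ES B))
           (disj : ES A :&: ES B = set0).

Definition G1 := subG xA yA xy.
Definition G2 := subG xB yB xy.

Definition gf (s : vtx G1 + vtx G2) : V :=
  match s with inl a => val a | inr b => val b end.

Definition gs (e : E) : edg G1 + edg G2 :=
  if (insub e : option {e0 : E | e0 \in ES A}) is Some a then inl (Some a)
  else if (insub e : option {e0 : E | e0 \in ES B}) is Some b then inr (Some b)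
  else inl None.

Lemma gs_spec e :
  (exists2 a : {e0 : E | e0 \in ES A}, gs e = inl (Some a) & val a = e) \/
  (exists2 b : {e0 : E | e0 \in ES B}, gs e = inr (Some b) & val b = e).
Proof.
rewrite /gs; case: insubP => [a _ ea|na]; first by left; exists a.
case: insubP => [b _ eb|nb]; first by right; exists b.
by move: (cover e); rewrite (negbTE na) (negbTE nb).
Qed.

Lemma tcs : two_clique_sum (None : edg G1) (None : edg G2) G.
Proof.
exists gf, gs; split.
- move=> v; have : v \in A :|: B by rewrite uAB inE.
  rewrite inE => /orP[vA|vB]; first by exists (inl (Sub v vA : vtx G1)).
  by exists (inr (Sub v vB : vtx G2)).
- have inX : forall v, v \in A -> v \in B -> (v == x) || (v == y).
    move=> v vA vB; have : v \in A :&: B by rewrite inE vA vB.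
    by rewrite hAB !inE.
  move=> u w; split; last first.
    by case=> [->|[[[-> ->]|[-> ->]]|[[-> ->]|[-> ->]]]].
  case: u w => [a|b] [a'|b'] /= h.
  + by left; congr inl; apply: val_inj.
  + have vB : val a \in B by move: (valP b') => /=; rewrite -h.
    have := inX _ (valP a) vB; rewrite /= => /orP[]/eqP hx;
      right; left; [left|right]; split; congr (_ _); apply: val_inj => /=;
      by rewrite -?h hx.
  + have vA : val b \in A by move: (valP a') => /=; rewrite h.
    have := inX _ vA (valP b); rewrite /= => /orP[]/eqP hx;
      right; right; [left|right]; split; congr (_ _); apply: val_inj => /=;
      by rewrite -?h hx.
  + by left; congr inr; apply: val_inj.
- move=> e1 e2 h.
  case: (gs_spec e1) => [[a h1 <-]|[b h1 <-]];
  case: (gs_spec e2) => [[a' h2 <-]|[b' h2 <-]]; rewrite h1 h2 in h; (try discriminate); by case: h => ->.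
- move=> a; split.
    case=> e <-; case: (gs_spec e) => [[a' -> _]|[b' -> _]]; by split.
  case: a => [[a|]|[b|]] [h1 h2] //; [exists (val a) | exists (val b)].
    rewrite /gs; case: insubP => [a' _ ea'|na].
      by congr (inl (Some _)); apply: val_inj.
    by rewrite (valP a) in na.
  rewrite /gs; case: insubP => [a' _ ea'|_].
    have : val b \in ES A :&: ES B by rewrite inE (valP b) -ea' (valP a').
    by rewrite disj inE.
  case: insubP => [b' _ eb'|nb]; first by congr (inr (Some _)); apply: val_inj.
  by rewrite (valP b) in nb.
- move=> e; case: (gs_spec e) => [[a -> <-]|[b -> <-]] /=; exact: joins_st.
Qed.
End Glue.

Lemma split_ES (G : mgraph) (Ta Tb : {set edg G}) (S : {set vtx G}) :
  Ta :&: Tb = set0 -> Ta :|: Tb = setT ->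
  [/\ (Ta :&: ES S) \subset ES S, (Tb :&: ES S) \subset ES S,
      [disjoint Ta :&: ES S & Tb :&: ES S],
      (Ta :&: ES S) :|: (Tb :&: ES S) = ES S &
      #|Ta :&: ES S| + #|Tb :&: ES S| = #|ES S|].
Proof.
move=> dT uT.
have d : (Ta :&: ES S) :&: (Tb :&: ES S) = set0.
  by rewrite setIACA dT set0I.
have u : (Ta :&: ES S) :|: (Tb :&: ES S) = ES S by rewrite -setIUl uT setTI.
split; try exact: subsetIr; first by rewrite -setI_eq0 d.
  exact: u.
by rewrite -cardsUI d cards0 addn0 u.
Qed.

Section Final.
Variable G : mgraph.
Local Notation V := (vtx G).
Local Notation E := (edg G).
Hypothesis atG : atomic G.
Hypothesis n3 : 2 < #|V|.
Variables (x y : V) (A B : {set V}).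
Hypotheses (xA : x \in A) (yA : y \in A) (xB : x \in B) (yB : y \in B) (xy : x != y).
Hypotheses (hAB : A :&: B = [set x; y]) (uAB : A :|: B = setT).
Hypotheses (cover : forall e, (e \in ES A) || (e \in ES B))
           (disj : ES A :&: ES B = set0).
Hypotheses (cA : #|ES A| + 3 = 2 * #|A|) (cB : #|ES B| + 3 = 2 * #|B|).
Hypothesis noxy : forall e : E, ~~ joins e x y.

Lemma finish (Ta Tb : {set E}) : acyclic Ta -> acyclic Tb ->
  Ta :&: Tb = set0 -> Ta :|: Tb = setT -> #|Ta :&: ES A| + 1 = #|A| ->
  exists (G1 G2 : mgraph) (d1 : edg G1) (d2 : edg G2),
      [/\ simple G1, simple G2, bispanning G1, bispanning G2 &
          two_clique_sum d1 d2 G].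
Proof.
move=> acTa acTb dT uT hPA.
have [sPA sQA dA uA sumA] := split_ES A dT uT.
have dT' : Tb :&: Ta = set0 by rewrite setIC.
have uT' : Tb :|: Ta = setT by rewrite setUC.
have [sPB sQB dB uB sumB] := split_ES B dT' uT'.
set PA := Ta :&: ES A in sPA dA uA sumA hPA.
set QA := Tb :&: ES A in sQA dA uA sumA.
set PB := Tb :&: ES B in sPB dB uB sumB.
set QB := Ta :&: ES B in sQB dB uB sumB.
have ew : forall S (F : {set E}), F \subset ES S -> edges_within S F.
  by move=> S F sub e /(subsetP sub) /ES_within.
have acPA : acyclic PA by apply: acyclic_sub acTa; apply: subsetIl.
have acQA : acyclic QA by apply: acyclic_sub acTb; apply: subsetIl.
have acPB : acyclic PB by apply: acyclic_sub acTb; apply: subsetIl.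
have acQB : acyclic QB by apply: acyclic_sub acTa; apply: subsetIl.
have neB : B != set0 by apply/set0Pn; exists x.
have dAB : forall (T : {set E}), (T :&: ES A) :&: (T :&: ES B) = set0.
  by move=> T; rewrite setIACA setIid disj setI0.
have cPA := forest_conn (ew _ _ sPA) acPA hPA.
have ncQB : ~~ connect (adj QB) x y.
  apply/negP => hc; apply: (cross acTa xy _ _ (dAB Ta) (cPA x y xA yA)).
  - exact: subsetIl.
  - exact: subsetIl.
  by rewrite adj_csym.
have lQB := forest_disc (ew _ _ sQB) acQB xB yB ncQB.
have lPB := forest_le (ew _ _ sPB) acPB neB.
have [hPB hQB] : #|PB| + 1 = #|B| /\ #|QB| + 2 = #|B|.
  move: lQB lPB sumB cB; move: #|PB| #|QB| #|B| #|ES B| => a b c d.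
  clear; lia.
have cPB := forest_conn (ew _ _ sPB) acPB hPB.
have ncQA : ~~ connect (adj QA) x y.
  apply/negP => hc.
  have d' : PB :&: QA = set0 by rewrite setIC dAB.
  apply: (cross acTb xy _ _ d' (cPB x y xB yB)).
  - exact: subsetIl.
  - exact: subsetIl.
  by rewrite adj_csym.
have hQA : #|QA| + 2 = #|A|.
  move: hPA sumA cA; move: #|PA| #|QA| #|A| #|ES A| => a b c d.
  clear; lia.
exists (G1 xA yA xy), (G2 xB yB xy), None, None; split.
- exact: sub_simple noxy (nopar atG n3).
- exact: sub_simple noxy (nopar atG n3).
- exact: (sub_bispanning xA yA xy sPA sQA dA uA acPA acQA hPA hQA ncQA).
- exact: (sub_bispanning xB yB xy sPB sQB dB uB acPB acQB hPB hQB ncQB).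
- exact: tcs.
Qed.
End Final.


Theorem mainTheorem10 (G : mgraph) :
  atomic G -> vertex_connectivity G 2 ->
  forall x y : vtx G, vertex_cut G [set x; y] ->
    (forall e : edg G, ~~ joins e x y) /\
    exists (G1 G2 : mgraph) (d1 : edg G1) (d2 : edg G2),
      [/\ simple G1, simple G2, bispanning G1, bispanning G2 &
          two_clique_sum d1 d2 G].
Proof.
move=> atG [[n3 conn1] _] x y cut.
set X := [set x; y] in cut *.
set R := adj (edges_avoiding X).
have symR : connect_sym R := adj_csym _.
have h1c : 1 < ncomp X.
  have h0 : 0 < ncomp (set0 : {set vtx G}).
    rewrite /ncomp /n_comp_mem; apply/card_gt0P.
    exists (root (adj (edges_avoiding (set0 : {set vtx G}))) x).
    by rewrite inE /= (roots_root (adj_csym _)) in_setC in_set0.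
  exact: leq_ltn_trans h0 cut.
move: h1c; rewrite /ncomp /n_comp_mem => /card_gt1P [r1 [r2 [h1 h2 ne12]]].
move: h1 h2; rewrite !inE /= => /andP[rt1 nx1] /andP[rt2 nx2].
have nX1 : r1 \notin X by rewrite /X !inE.
have nX2 : r2 \notin X by rewrite /X !inE.
have nc12 : ~~ connect R r1 r2.
  apply/negP => /(rootP symR) h.
  by move/eqP: rt1; move/eqP: rt2; rewrite /R h => -> h'; rewrite h' eqxx in ne12.
have xy : x != y.
  apply/negP => /eqP exy.
  have cX : #|X| < 2 by rewrite /X exy setUid cards1.
  move/negP: nc12; apply; apply: (conn1 _ cX); by rewrite inE.
have xX : x \in X by rewrite /X !inE eqxx.
have yX : y \in X by rewrite /X !inE eqxx orbT.
set C := [set w | (w \notin X) && connect R r1 w].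
have CX : forall w, w \in C -> w \notin X by move=> w; rewrite inE => /andP[].
have stepC : forall e u w, joins e u w -> u \in C -> w \notin X -> w \in C.
  move=> e u w j; rewrite inE => /andP[uX cu] wX; rewrite inE wX /=.
  apply: (connect_trans cu); apply: connect1; apply: (adj1 _ j).
  rewrite inE; case/orP: j => /andP[/eqP -> /eqP ->]; by rewrite uX wX.
set A := C :|: X.
set B := ~: C.
have xC : x \notin C by apply/negP => /CX; rewrite xX.
have yC : y \notin C by apply/negP => /CX; rewrite yX.
have xA : x \in A by rewrite inE xX orbT.
have yA : y \in A by rewrite inE yX orbT.
have xB : x \in B by rewrite inE.
have yB : y \in B by rewrite inE.
have r1C : r1 \in C by rewrite inE nX1 connect0.
have r2C : r2 \notin C.
  by apply/negP; rewrite inE => /andP[_ h]; rewrite h in nc12.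
have hAB : A :&: B = X.
  apply/setP => w; rewrite in_setI in_setU in_setC.
  case wC: (w \in C); case wX: (w \in X) => //=.
  by move: (CX _ wC); rewrite wX.
have uAB : A :|: B = setT.
  by apply/setP => w; rewrite !in_setU in_setC in_setT; case: (w \in C); rewrite ?orbT.
have memA : forall w, (w \in A) = (w \in C) || (w \in X) by move=> w; rewrite in_setU.
have memB : forall w, (w \in B) = (w \notin C) by move=> w; rewrite in_setC.
clearbody A B.
have cover : forall e, (e \in ES A) || (e \in ES B).
  move=> e; rewrite !inE !memA !memB.
  case sC: (src e \in C); case tC: (tgt e \in C) => //=; rewrite ?orbT ?andbT //.
    case tX: (tgt e \in X) => //.
    by move: (stepC e _ _ (joins_st e) sC (negbT tX)); rewrite tC.
  case sX: (src e \in X) => //.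
  have j : joins e (tgt e) (src e) by rewrite joins_sym joins_st.
  by move: (stepC e _ _ j tC (negbT sX)); rewrite sC.
case: (atG) => [[_ _ [T1 [T2 [[_ c1 ac1] [_ c2 ac2] dT uT]]]] _].
have ewT : forall T : {set edg G}, edges_within setT T by move=> T e _; rewrite !inE.
have neV : (setT : {set vtx G}) != set0 by apply/set0Pn; exists x; rewrite inE.
have t1 := tree_card (ewT T1) ac1 c1 neV.
have t2 := tree_card (ewT T2) ac2 c2 neV.
have dT0 : T1 :&: T2 = set0 by apply/eqP; rewrite setI_eq0.
have cE : #|T1| + #|T2| = #|[set: edg G]| by rewrite -cardsUI dT0 cards0 addn0 uT.
have cEAB : #|ES A :|: ES B| = #|[set: edg G]|.
  by apply: eq_card => e; rewrite in_setU cover inE.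
have cAB : #|A| + #|B| = #|[set: vtx G]| + 2.
  by rewrite -cardsUI uAB hAB /X cards2 xy.
have nTA : A != setT.
  apply/negP => /eqP h; have : r2 \in A by rewrite h inE.
  by rewrite memA (negbTE r2C) (negbTE nX2).
have nTB : B != setT.
  apply/negP => /eqP h; have : r1 \in B by rewrite h inE.
  by rewrite memB r1C.
have gA : 1 < #|A| by apply/card_gt1P; exists x, y.
have gB : 1 < #|B| by apply/card_gt1P; exists x, y.
have sA := sparse atG nTA gA.
have sB := sparse atG nTB gB.
have hI := cardsUI (ES A) (ES B).
have [k0 [cA cB]] : #|ES A :&: ES B| = 0 /\ #|ES A| + 3 = 2 * #|A| /\
                    #|ES B| + 3 = 2 * #|B|.
  move: t1 t2 cE cEAB cAB sA sB hI.
  move: #|T1| #|T2| #|[set: edg G]| #|ES A :|: ES B| #|ES A :&: ES B|.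
  move: #|ES A| #|ES B| #|A| #|B| #|[set: vtx G]|.
  clear; lia.
have disj : ES A :&: ES B = set0 by apply: cards0_eq.
have noxy : forall e, ~~ joins e x y.
  move=> e; apply/negP => j.
  have : e \in ES A :&: ES B.
    rewrite !inE !memA !memB.
    by case/orP: j => /andP[/eqP -> /eqP ->]; rewrite xX yX xC yC ?orbT.
  by rewrite disj inE.
split=> //.
have [_ _ _ _ sumA] := split_ES A dT0 uT.
have ewA : forall T : {set edg G}, edges_within A (T :&: ES A).
  by move=> T e; rewrite inE => /andP[_ /ES_within].
have neA : A != set0 by apply/set0Pn; exists x.
have l1 := forest_le (ewA T1) (acyclic_sub (subsetIl _ _) ac1) neA.
have l2 := forest_le (ewA T2) (acyclic_sub (subsetIl _ _) ac2) neA.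
case: (boolP (#|T1 :&: ES A| + 1 == #|A|)) => [/eqP h|h].
  exact: (finish atG n3 xA yA xB yB xy hAB uAB cover disj cA cB noxy ac1 ac2 dT0 uT h).
have h2 : #|T2 :&: ES A| + 1 = #|A|.
  move: h l1 l2 sumA cA; move: #|T1 :&: ES A| #|T2 :&: ES A| #|ES A| #|A|.
  clear; lia.
have dT1 : T2 :&: T1 = set0 by rewrite setIC.
have uT1 : T2 :|: T1 = setT by rewrite setUC.
exact: (finish atG n3 xA yA xB yB xy hAB uAB cover disj cA cB noxy ac2 ac1 dT1 uT1 h2).
Qed.
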